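(* For each integer $n\geq 3$, the variety $\mathbb{X}$ of $n$-solvable groups (groups whose derived series reaches the trivial group in at most $n$ steps) is action accessible and admits normalizers, but is not weakly action representable.
   Context: A split extension with kernel $X$ is a diagram $X\xrightarrow{\kappa}A\underset{\beta}{\overset{\alpha}{\rightleftarrows}}B$ with $\kappa$ the kernel of $\alpha$ and $\alpha\beta=1_B$; morphisms of split extensions with kernel $X$ are triples of morphisms commuting with all structure maps and equal to $1_X$ on kernels. A split extension with kernel $X$ is faithful if every split extension with kernel $X$ admits at most one morphism into it; the category is action accessible if every split extension with kernel $X$ admits a morphism into a faithful one, for every $X$. The category admits normalizers if every monomorphism $f:W\to X$ has a universal factorization $f=mn$ with $n$ a normal monomorphism and $m$ a monomorphism (terminal among such factorizations). For an object $X$, $\mathrm{SplExt}(-,X)$ is the functor sending $B$ to the set of isomorphism classes of split extensions of $B$ with kernel $X$, acting on morphisms by pullback; the category is weakly action representable if for each $X$ there is an object $M$ and a monomorphism of functors $\mathrm{SplExt}(-,X)\to\hom(-,M)$. *)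

(* Defs.v *)
Set Implicit Arguments.
Unset Strict Implicit.

Record group := Group {
  gcar :> Type;
  gmul : gcar -> gcar -> gcar;
  gone : gcar;
  ginv : gcar -> gcar;
  gassoc : forall x y z, gmul x (gmul y z) = gmul (gmul x y) z;
  gmul1 : forall x, gmul gone x = x;
  gmulV : forall x, gmul (ginv x) x = gone }.

Arguments gmul {g} _ _.
Arguments gone {g}.
Arguments ginv {g} _.

Inductive gen (G : group) (S : G -> Prop) : G -> Prop :=
| gen_in : forall x, S x -> gen S x
| gen_one : gen S gone
| gen_mul : forall x y, gen S x -> gen S y -> gen S (gmul x y)
| gen_inv : forall x, gen S x -> gen S (ginv x).

Definition comm (G : group) (x y : G) : G :=
  gmul (gmul (ginv x) (ginv y)) (gmul x y).

Fixpoint derived (G : group) (k : nat) : G -> Prop :=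
  match k with
  | O => fun _ => True
  | Datatypes.S k => @gen G (fun z : G => exists x y : G,
                     @derived G k x /\ @derived G k y /\ z = @comm G x y)
  end.

Definition n_solvable (n : nat) (G : group) : Prop :=
  forall x : G, @derived G n x -> x = gone.

Record hom (G H : group) := Hom {
  hfun :> G -> H;
  hmulP : forall x y, hfun (gmul x y) = gmul (hfun x) (hfun y) }.

Definition hcomp (G H K : group) (g : hom H K) (f : hom G H) : hom G K.
Proof.
  refine (@Hom G K (fun x => g (f x)) _).
  intros x y; rewrite (hmulP f), (hmulP g); reflexivity.
Defined.

Definition hid (G : group) : hom G G.
Proof. refine (@Hom G G (fun x => x) _). reflexivity. Defined.

Definition hzero (G H : group) : hom G H.
Proof. refine (@Hom G H (fun _ => gone) _). intros; rewrite gmul1; reflexivity. Defined.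

Definition heq (G H : group) (f g : hom G H) : Prop := forall x, f x = g x.

Record obj (n : nat) := Obj { ogrp :> group; osolv : n_solvable n ogrp }.

Definition is_mono (n : nat) (W Y : obj n) (f : hom W Y) : Prop :=
  forall (T : obj n) (g h : hom T W), heq (hcomp f g) (hcomp f h) -> heq g h.

Definition is_kernel (n : nat) (K A B : obj n) (k : hom K A) (p : hom A B) : Prop :=
  heq (hcomp p k) (hzero K B) /\
  forall (T : obj n) (g : hom T A), heq (hcomp p g) (hzero T B) ->
    exists w : hom T K, heq (hcomp k w) g /\
      forall w' : hom T K, heq (hcomp k w') g -> heq w' w.

Definition is_normal_mono (n : nat) (W Y : obj n) (f : hom W Y) : Prop :=
  exists (Z : obj n) (p : hom Y Z), is_kernel f p.

Definition admits_normalizers (n : nat) : Prop :=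
  forall (W Y : obj n) (f : hom W Y), is_mono f ->
    exists (N : obj n) (nn : hom W N) (m : hom N Y),
      is_normal_mono nn /\ is_mono m /\ heq (hcomp m nn) f /\
      forall (N' : obj n) (nn' : hom W N') (m' : hom N' Y),
        is_normal_mono nn' -> is_mono m' -> heq (hcomp m' nn') f ->
        exists u : hom N' N, heq (hcomp u nn') nn /\ heq (hcomp m u) m' /\
          forall u' : hom N' N, heq (hcomp u' nn') nn -> heq (hcomp m u') m' -> heq u' u.

Record splext (n : nat) (X B : obj n) := SplExt {
  sA : obj n;
  sk : hom X sA;
  sa : hom sA B;
  sb : hom B sA;
  sk_ker : is_kernel sk sa;
  sab : heq (hcomp sa sb) (hid B) }.

Arguments sA {n X B} _.
Arguments sk {n X B} _.
Arguments sa {n X B} _.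
Arguments sb {n X B} _.

Record splmor (n : nat) (X B B' : obj n) (E : splext X B) (E' : splext X B') := SplMor {
  mA : hom (sA E) (sA E');
  mB : hom B B';
  mk : heq (hcomp mA (sk E)) (sk E');
  ma : heq (hcomp (sa E') mA) (hcomp mB (sa E));
  mb : heq (hcomp mA (sb E)) (hcomp (sb E') mB) }.

Definition faithful_splext (n : nat) (X B' : obj n) (E' : splext X B') : Prop :=
  forall (B : obj n) (E : splext X B) (f g : splmor E E'),
    heq (mA f) (mA g) /\ heq (mB f) (mB g).

Definition action_accessible (n : nat) : Prop :=
  forall (X B : obj n) (E : splext X B),
    exists (B' : obj n) (E' : splext X B'), faithful_splext E' /\ inhabited (splmor E E').

Definition splext_iso (n : nat) (X B : obj n) (E E' : splext X B) : Prop :=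
  exists (u : hom (sA E) (sA E')) (v : hom (sA E') (sA E)),
    heq (hcomp v u) (hid _) /\ heq (hcomp u v) (hid _) /\
    heq (hcomp u (sk E)) (sk E') /\ heq (hcomp (sa E') u) (sa E) /\
    heq (hcomp u (sb E)) (sb E').

(* E' is (a representative of) the pullback f^* E of E along f : B' -> B:
   A' together with g : A' -> A is a pullback of a : A -> B along f in X,
   with the induced kernel and section. *)
Definition is_pullback_splext (n : nat) (X B B' : obj n) (f : hom B' B)
    (E : splext X B) (E' : splext X B') : Prop :=
  exists g : hom (sA E') (sA E),
    heq (hcomp (sa E) g) (hcomp f (sa E')) /\
    heq (hcomp g (sk E')) (sk E) /\
    heq (hcomp g (sb E')) (hcomp (sb E) f) /\
    forall (T : obj n) (u : hom T (sA E)) (v : hom T B'),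
      heq (hcomp (sa E) u) (hcomp f v) ->
      exists w : hom T (sA E'),
        heq (hcomp g w) u /\ heq (hcomp (sa E') w) v /\
        forall w' : hom T (sA E'), heq (hcomp g w') u -> heq (hcomp (sa E') w') v ->
          heq w' w.

(* A monomorphism (componentwise injective natural transformation)
   SplExt(-,X) -> hom(-,M), given on representatives: tau must be
   constant on isomorphism classes, injective on them, and natural
   w.r.t. pullback. *)
Definition weakly_action_representable (n : nat) : Prop :=
  forall X : obj n, exists (M : obj n) (tau : forall B : obj n, splext X B -> hom B M),
    (forall (B : obj n) (E E' : splext X B), splext_iso E E' -> heq (tau B E) (tau B E')) /\
    (forall (B : obj n) (E E' : splext X B), heq (tau B E) (tau B E') -> splext_iso E E') /\
    (forall (B B' : obj n) (f : hom B' B) (E : splext X B) (E' : splext X B'),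
        is_pullback_splext f E E' -> heq (tau B' E') (hcomp (tau B E) f)).

(* Main.v *)
Require Import Defs.
From Stdlib Require Import FunctionalExtensionality ProofIrrelevance PropExtensionality ClassicalEpsilon Arith Lia Bool.


Lemma mulVr {G : group} (x : G) : gmul x (ginv x) = gone.
Proof.
  assert (H : gmul (ginv (ginv x)) (ginv x) = gone) by apply gmulV.
  rewrite <- (gmul1 (gmul x (ginv x))).
  rewrite <- H at 1.
  rewrite <- gassoc, (gassoc (ginv x) x (ginv x)), gmulV, gmul1. exact H.
Qed.

Lemma mulr1 {G : group} (x : G) : gmul x gone = x.
Proof. rewrite <- (gmulV x), gassoc, mulVr, gmul1. reflexivity. Qed.

Lemma mul_cancel_l {G : group} (a x y : G) : gmul a x = gmul a y -> x = y.
Proof.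
  intro H. rewrite <- (gmul1 x), <- (gmul1 y), <- (gmulV a), <- !gassoc, H. reflexivity.
Qed.

Lemma mul_cancel_r {G : group} (a x y : G) : gmul x a = gmul y a -> x = y.
Proof.
  intro H. rewrite <- (mulr1 x), <- (mulr1 y), <- (mulVr a), !gassoc, H. reflexivity.
Qed.

Lemma inv_inv {G : group} (x : G) : ginv (ginv x) = x.
Proof. apply (mul_cancel_l (ginv x)). rewrite mulVr, gmulV. reflexivity. Qed.

Lemma inv_one {G : group} : ginv (@gone G) = gone.
Proof. rewrite <- (mulr1 (ginv gone)). apply gmulV. Qed.

Lemma inv_mul {G : group} (x y : G) : ginv (gmul x y) = gmul (ginv y) (ginv x).
Proof.
  apply (mul_cancel_r (gmul x y)). rewrite gmulV.
  rewrite <- gassoc, (gassoc (ginv x) x y), gmulV, gmul1, gmulV. reflexivity.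
Qed.

Lemma inv_uniq {G : group} (x y : G) : gmul x y = gone -> ginv x = y.
Proof.
  intro H. apply (mul_cancel_l x). rewrite mulVr. auto.
Qed.

Lemma comm_commute {G : group} (x y : G) : gmul x y = gmul y x -> comm x y = gone.
Proof.
  intro H. unfold comm. rewrite H, <- gassoc, (gassoc (ginv y) y x), gmulV, gmul1, gmulV.
  reflexivity.
Qed.

Lemma hom_one {G H : group} (f : hom G H) : f gone = gone.
Proof.
  apply (mul_cancel_l (f gone)). rewrite <- hmulP, gmul1, mulr1. reflexivity.
Qed.

Lemma hom_inv {G H : group} (f : hom G H) (x : G) : f (ginv x) = ginv (f x).
Proof.
  symmetry. apply inv_uniq. rewrite <- hmulP, mulVr. apply hom_one.
Qed.

Lemma hom_comm {G H : group} (f : hom G H) (x y : G) : f (comm x y) = comm (f x) (f y).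
Proof. unfold comm. rewrite !hmulP, !hom_inv. reflexivity. Qed.

Lemma sig_eq {A : Type} {P : A -> Prop} (a b : {x | P x}) : proj1_sig a = proj1_sig b -> a = b.
Proof. destruct a as [a pa], b as [b pb]; simpl; intros ->. f_equal. apply proof_irrelevance. Qed.

Lemma gen_ind {G : group} (S P : G -> Prop) :
  (forall x, S x -> P x) -> P gone -> (forall x y, P x -> P y -> P (gmul x y)) ->
  (forall x, P x -> P (ginv x)) -> forall x, gen S x -> P x.
Proof. intros H1 H2 H3 H4 x Hx. induction Hx; auto. Qed.

Lemma hom_derived {G H : group} (f : hom G H) k x : @derived G k x -> @derived H k (f x).
Proof.
  revert x. induction k as [|k IH]; simpl; auto.
  intros x Hx. induction Hx as [z [a [b [Ha [Hb ->]]]]| | |].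
  - apply gen_in. exists (f a), (f b). rewrite hom_comm. auto.
  - rewrite hom_one. apply gen_one.
  - rewrite hmulP. apply gen_mul; auto.
  - rewrite hom_inv. apply gen_inv; auto.
Qed.

Lemma surj_derived {G H : group} (f : hom G H) (Hs : forall y, exists x, f x = y) k y :
  @derived H k y -> exists x, @derived G k x /\ f x = y.
Proof.
  revert y. induction k as [|k IH]; simpl.
  - intros y _. destruct (Hs y) as [x Hx]. exists x; auto.
  - intros y Hy. induction Hy as [z [a [b [Ha [Hb ->]]]]| | |].
    + destruct (IH a Ha) as [a' [Ha' <-]]. destruct (IH b Hb) as [b' [Hb' <-]].
      exists (comm a' b'). split; [apply gen_in; exists a', b'; auto| apply hom_comm].
    + exists gone. split; [apply gen_one| apply hom_one].
    + destruct IHHy1 as [a [? <-]], IHHy2 as [b [? <-]]. exists (gmul a b).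
      split; [apply gen_mul; auto| apply hmulP].
    + destruct IHHy as [a [? <-]]. exists (ginv a). split; [apply gen_inv; auto| apply hom_inv].
Qed.

Lemma nsolv_inj2 (n : nat) (G H1 H2 : group) (f1 : hom G H1) (f2 : hom G H2) :
  n_solvable n H1 -> n_solvable n H2 ->
  (forall x, f1 x = gone -> f2 x = gone -> x = gone) -> n_solvable n G.
Proof.
  intros S1 S2 Hi x Hx. apply Hi; [apply S1| apply S2]; apply hom_derived; auto.
Qed.

Lemma nsolv_surj (n : nat) (G H : group) (f : hom G H) (Hs : forall y, exists x, f x = y) :
  n_solvable n G -> n_solvable n H.
Proof.
  intros S y Hy. destruct (surj_derived f Hs n y Hy) as [x [Hx <-]]. rewrite (S x Hx). apply hom_one.
Qed.

Lemma derived_triv_S {G : group} m : (forall x, @derived G m x -> x = gone) ->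
  forall x, @derived G (S m) x -> x = gone.
Proof.
  intros H x Hx. simpl in Hx. revert x Hx. apply gen_ind.
  - intros z [a [b [Ha [Hb ->]]]]. rewrite (H a Ha), (H b Hb). apply comm_commute. reflexivity.
  - reflexivity.
  - intros x y -> ->. apply gmul1.
  - intros x ->. apply inv_one.
Qed.

Lemma derived_triv_le {G : group} m n : (forall x, @derived G m x -> x = gone) -> m <= n ->
  n_solvable n G.
Proof.
  intros H Hle. induction Hle; [exact H|]. intros x Hx. exact (derived_triv_S _ IHHle x Hx).
Qed.

Lemma mulKV {G : group} (p r : G) : gmul (ginv p) (gmul p r) = r.
Proof. rewrite gassoc, gmulV. apply gmul1. Qed.
Lemma mulVK {G : group} (p r : G) : gmul p (gmul (ginv p) r) = r.
Proof. rewrite gassoc, mulVr. apply gmul1. Qed.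

Ltac gnorm := repeat progress (rewrite ?inv_mul, ?inv_inv, ?inv_one, <- ?gassoc, ?gmulV, ?mulVr,
  ?gmul1, ?mulr1, ?mulKV, ?mulVK).

Definition gconj {G : group} (g x : G) : G := gmul (gmul g x) (ginv g).

Lemma gconj_mul {G : group} (g x y : G) : gconj g (gmul x y) = gmul (gconj g x) (gconj g y).
Proof. unfold gconj. gnorm. reflexivity. Qed.
Lemma gconj_comp {G : group} (g h x : G) : gconj (gmul g h) x = gconj g (gconj h x).
Proof. unfold gconj. gnorm. reflexivity. Qed.
Lemma gconj_one {G : group} (x : G) : gconj gone x = x.
Proof. unfold gconj. gnorm. reflexivity. Qed.
Lemma hom_gconj {G H : group} (f : hom G H) (g x : G) : f (gconj g x) = gconj (f g) (f x).
Proof. unfold gconj. rewrite !hmulP, hom_inv. reflexivity. Qed.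
Ltac gnormH H := repeat progress (rewrite ?inv_mul, ?inv_inv, ?inv_one, <- ?gassoc, ?gmulV, ?mulVr,
  ?gmul1, ?mulr1, ?mulKV, ?mulVK in H).


Definition subgroup (G : group) (P : G -> Prop) (H1 : P gone)
  (Hm : forall x y, P x -> P y -> P (gmul x y)) (Hi : forall x, P x -> P (ginv x)) : group.
Proof.
  refine (@Group {x | P x}
    (fun a b => exist _ (gmul (proj1_sig a) (proj1_sig b)) (Hm _ _ (proj2_sig a) (proj2_sig b)))
    (exist _ gone H1) (fun a => exist _ (ginv (proj1_sig a)) (Hi _ (proj2_sig a))) _ _ _);
  intros; apply sig_eq; simpl; [apply gassoc| apply gmul1| apply gmulV].
Defined.

Definition incl {G : group} {P : G -> Prop} {H1 Hm Hi} : hom (@subgroup G P H1 Hm Hi) G :=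
  @Hom (@subgroup G P H1 Hm Hi) G (fun a : {x | P x} => proj1_sig a) (fun _ _ => eq_refl).

Lemma sub_solv n G P H1 Hm Hi : n_solvable n G -> n_solvable n (@subgroup G P H1 Hm Hi).
Proof.
  intro S. apply (@nsolv_inj2 n _ _ _ incl incl S S).
  intros x Hx _. apply sig_eq. exact Hx.
Qed.

Definition prodg (G H : group) : group.
Proof.
  refine (@Group (G * H)%type (fun a b => (gmul (fst a) (fst b), gmul (snd a) (snd b)))
    (gone, gone) (fun a => (ginv (fst a), ginv (snd a))) _ _ _);
  intros; simpl; [rewrite !gassoc| rewrite !gmul1; destruct x| rewrite !gmulV]; reflexivity.
Defined.

Definition pr1h {G H : group} : hom (prodg G H) G :=
  @Hom (prodg G H) G (fun p : (G * H)%type => fst p) (fun _ _ => eq_refl).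
Definition pr2h {G H : group} : hom (prodg G H) H :=
  @Hom (prodg G H) H (fun p : (G * H)%type => snd p) (fun _ _ => eq_refl).

Lemma prod_solv n G H : n_solvable n G -> n_solvable n H -> n_solvable n (prodg G H).
Proof.
  intros S1 S2. apply (@nsolv_inj2 n _ _ _ pr1h pr2h S1 S2).
  intros [a b]; simpl; intros -> ->; reflexivity.
Qed.

Definition KPgroup {G H : group} (f : hom G H) : group.
Proof.
  refine (@subgroup (prodg G G) (fun p => f (fst p) = f (snd p)) _ _ _); simpl.
  - reflexivity.
  - intros x y Hx Hy. rewrite !hmulP, Hx, Hy. reflexivity.
  - intros x Hx. rewrite !hom_inv, Hx. reflexivity.
Defined.

Definition KPobj {n} {G H : obj n} (f : hom G H) : obj n.
Proof.
  refine (@Obj n (KPgroup f) _). apply sub_solv, prod_solv; apply osolv.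
Defined.

Definition kp1 {G H : group} (f : hom G H) : hom (KPgroup f) G :=
  hcomp pr1h incl.
Definition kp2 {G H : group} (f : hom G H) : hom (KPgroup f) G :=
  hcomp pr2h incl.

Lemma mono_inj n (W Y : obj n) (f : hom W Y) : is_mono f -> forall x y, f x = f y -> x = y.
Proof.
  intros Hm x y Hxy.
  assert (Hh := Hm (KPobj f) (kp1 f) (kp2 f)).
  assert (Hp : heq (hcomp f (kp1 f)) (hcomp f (kp2 f))).
  { intros [[a b] Hab]. exact Hab. }
  specialize (Hh Hp (exist _ (x, y) Hxy)). exact Hh.
Qed.

Lemma inj_mono n (W Y : obj n) (f : hom W Y) : (forall x y, f x = f y -> x = y) -> is_mono f.
Proof. intros Hi T g h H t. apply Hi, H. Qed.

Lemma kernel_mono n (K A B : obj n) (k : hom K A) (p : hom A B) : is_kernel k p -> is_mono k.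
Proof.
  intros [H0 H1] T g h Hgh.
  assert (Hz : heq (hcomp p (hcomp k g)) (hzero T B)).
  { intro t. simpl. apply H0. }
  destruct (H1 T (hcomp k g) Hz) as [w [Hw Hu]].
  intro t. rewrite (Hu g (fun _ => eq_refl) t), (Hu h (fun t => eq_sym (Hgh t)) t). reflexivity.
Qed.

Lemma kernel_inj n (K A B : obj n) (k : hom K A) (p : hom A B) : is_kernel k p ->
  forall x y, k x = k y -> x = y.
Proof. intro H. apply mono_inj. eapply kernel_mono; eauto. Qed.

Definition KerGroup {A B : group} (p : hom A B) : group.
Proof.
  refine (@subgroup A (fun z => p z = gone) _ _ _).
  - apply hom_one.
  - intros x y Hx Hy. rewrite hmulP, Hx, Hy. apply gmul1.
  - intros x Hx. rewrite hom_inv, Hx. apply inv_one.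
Defined.

Definition KerObj {n} {A B : obj n} (p : hom A B) : obj n.
Proof. refine (@Obj n (KerGroup p) _). apply sub_solv, osolv. Defined.

Lemma kernel_surj n (K A B : obj n) (k : hom K A) (p : hom A B) : is_kernel k p ->
  forall z, p z = gone -> exists y, k y = z.
Proof.
  intros [H0 H1] z Hz.
  assert (Hg : heq (hcomp p (@incl A _ _ _ _ : hom (KerObj p) A)) (hzero (KerObj p) B)).
  { intros [a Ha]. exact Ha. }
  destruct (H1 (KerObj p) _ Hg) as [w [Hw _]].
  exists (w (exist _ z Hz)). apply (Hw (exist _ z Hz)).
Qed.


Record Act (X B : group) := MkAct {
  act :> B -> X -> X;
  act_hom : forall b x y, act b (gmul x y) = gmul (act b x) (act b y);
  act_mul : forall b c x, act (gmul b c) x = act b (act c x);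
  act_one : forall x, act gone x = x }.
Arguments act {X B} _ _ _.

Lemma act_gone {X B : group} (phi : Act X B) b : phi b gone = gone.
Proof.
  apply (mul_cancel_l (phi b gone)). rewrite <- act_hom, gmul1, mulr1. reflexivity.
Qed.

Lemma act_inv {X B : group} (phi : Act X B) b x : phi b (ginv x) = ginv (phi b x).
Proof. symmetry. apply inv_uniq. rewrite <- act_hom, mulVr. apply act_gone. Qed.

Definition SD {X B : group} (phi : Act X B) : group.
Proof.
  refine (@Group (X * B)%type
    (fun p q => (gmul (fst p) (phi (snd p) (fst q)), gmul (snd p) (snd q)))
    (gone, gone) (fun p => (phi (ginv (snd p)) (ginv (fst p)), ginv (snd p))) _ _ _).
  - intros [x b] [y c] [z d]; simpl. rewrite act_hom, act_mul, !gassoc. reflexivity.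
  - intros [x b]; simpl. rewrite act_one, !gmul1. reflexivity.
  - intros [x b]; simpl. rewrite <- act_hom, !gmulV, act_gone. reflexivity.
Defined.

Definition SDk {X B : group} (phi : Act X B) : hom X (SD phi).
Proof.
  refine (@Hom X (SD phi) (fun x => (x, gone)) _).
  intros x y; simpl. rewrite act_one, gmul1. reflexivity.
Defined.

Definition SDa {X B : group} (phi : Act X B) : hom (SD phi) B :=
  @Hom (SD phi) B (fun p : (X * B)%type => snd p) (fun _ _ => eq_refl).

Definition SDb {X B : group} (phi : Act X B) : hom B (SD phi).
Proof.
  refine (@Hom B (SD phi) (fun b => (gone, b)) _).
  intros x y; simpl. rewrite act_gone, gmul1. reflexivity.
Defined.

Lemma SD_kernel n (X B : obj n) (phi : Act X B) (HS : n_solvable n (SD phi)) :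
  @is_kernel n X (Obj HS) B (SDk phi) (SDa phi).
Proof.
  split.
  - intro x. reflexivity.
  - intros T g Hg.
    assert (Hs : forall t, snd (g t) = gone) by exact Hg.
    assert (Hw : forall x y, fst (g (gmul x y)) = gmul (fst (g x)) (fst (g y))).
    { intros x y. rewrite (hmulP g). simpl. rewrite Hs, act_one. reflexivity. }
    exists (@Hom T X (fun t => fst (g t)) Hw). split.
    + intro t; simpl. apply injective_projections; simpl; [reflexivity| symmetry; apply Hs].
    + intros w' Hw' t; simpl. specialize (Hw' t). simpl in Hw'. rewrite <- Hw'. reflexivity.
Qed.

Definition SDext {n} {X B : obj n} (phi : Act X B) (HS : n_solvable n (SD phi)) : splext X B :=
  @SplExt n X B (Obj HS) (SDk phi) (SDa phi) (SDb phi) (@SD_kernel n X B phi HS) (fun _ => eq_refl).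

Definition sdmapf {X B B' : group} (f : hom B' B) (p : (X * B')%type) : (X * B)%type :=
  (fst p, f (snd p)).

Lemma SD_pullback n (X B B' : obj n) (phi : Act X B) (phi' : Act X B') (f : hom B' B)
  (Hc : forall b x, phi' b x = phi (f b) x) HS HS' :
  is_pullback_splext f (SDext phi HS) (SDext phi' HS').
Proof.
  assert (Hg : forall p q : SD phi', (sdmapf f (gmul p q) : SD phi) =
      gmul (sdmapf f p : SD phi) (sdmapf f q : SD phi)).
  { intros [x b] [y c]; unfold sdmapf; simpl. rewrite Hc, hmulP. reflexivity. }
  exists (@Hom (SD phi') (SD phi) _ Hg). split; [|split; [|split]].
  - intro p; reflexivity.
  - intro x; simpl. unfold sdmapf; simpl. rewrite (hom_one f). reflexivity.
  - intro b; reflexivity.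
  - intros T u v Huv.
    assert (Hs : forall t, snd (u t) = f (v t)) by exact Huv.
    assert (Hw : forall x y, ((fst (u (gmul x y)), v (gmul x y)) : SD phi') =
       gmul ((fst (u x), v x) : SD phi') ((fst (u y), v y) : SD phi')).
    { intros x y; simpl. rewrite (hmulP u), (hmulP v). simpl. rewrite Hc, Hs. reflexivity. }
    exists (@Hom T (SD phi') (fun t => (fst (u t), v t)) Hw). split; [|split].
    + intro t; simpl. apply injective_projections; simpl; [reflexivity| symmetry; apply Hs].
    + intro t; reflexivity.
    + intros w' H1 H2 t; specialize (H1 t); specialize (H2 t); simpl in H1, H2 |- *.
      unfold sdmapf in H1. rewrite <- H1, <- H2. simpl.
      apply injective_projections; reflexivity.
Qed.



Lemma SD_solv n {X B : group} (phi : Act X B) d :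
  (forall x y : X, gmul x y = gmul y x) -> (forall b, @derived B d b -> b = gone) -> S d <= n ->
  n_solvable n (SD phi).
Proof.
  intros Hab Hd Hle. apply (@derived_triv_le _ (S d) n); auto.
  intros z Hz. simpl in Hz. revert z Hz. apply gen_ind.
  - intros z [p [q [Hp [Hq ->]]]].
    apply (@comm_commute (SD phi)).
    pose proof (Hd _ (hom_derived (SDa phi) d p Hp)) as E1.
    pose proof (Hd _ (hom_derived (SDa phi) d q Hq)) as E2.
    destruct p as [x b], q as [y c]; simpl in E1, E2; subst; simpl.
    rewrite !act_one, Hab. reflexivity.
  - reflexivity.
  - intros x y -> ->. apply gmul1.
  - intros x ->. apply inv_one.
Qed.


Definition Vg : group.
Proof.
  refine (@Group (nat -> bool) (fun x y => fun l => xorb (x l) (y l)) (fun _ => false)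
    (fun x => x) _ _ _); intros; apply functional_extensionality; intro l.
  - destruct (x l), (y l), (z l); reflexivity.
  - reflexivity.
  - destruct (x l); reflexivity.
Defined.

Lemma Vg_ab (x y : Vg) : gmul x y = gmul y x.
Proof. apply functional_extensionality; intro l. simpl. apply xorb_comm. Qed.

Definition C2g : group.
Proof.
  refine (@Group bool xorb false (fun x => x) _ _ _); intros.
  - destruct x, y, z; reflexivity.
  - reflexivity.
  - destruct x; reflexivity.
Defined.

Definition Hg : group.
Proof.
  refine (@Group (bool * bool * bool)%type
    (fun p q => match p, q with ((a, b), c), ((a', b'), c') =>
       ((xorb a a', xorb b b'), xorb (xorb c c') (andb a b')) end)
    ((false, false), false)
    (fun p => match p with ((a, b), c) => ((a, b), xorb c (andb a b)) end) _ _ _).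
  - intros [[a b] c] [[a' b'] c'] [[a'' b''] c'']. destruct a, b, c, a', b', c', a'', b'', c''; reflexivity.
  - intros [[a b] c]. destruct a, b, c; reflexivity.
  - intros [[a b] c]. destruct a, b, c; reflexivity.
Defined.

Lemma ab_triv1 (G : group) : (forall x y : G, gmul x y = gmul y x) ->
  forall x, @derived G 1 x -> x = gone.
Proof.
  intros Hab x Hx. simpl in Hx. revert x Hx. apply gen_ind.
  - intros z [a [b [_ [_ ->]]]]. apply comm_commute, Hab.
  - reflexivity.
  - intros x y -> ->. apply gmul1.
  - intros x ->. apply inv_one.
Qed.

Lemma C2_ab (x y : C2g) : gmul x y = gmul y x.
Proof. destruct x, y; reflexivity. Qed.

Lemma Hg_triv2 : forall x, @derived Hg 2 x -> x = gone.
Proof.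
  assert (H1 : forall x, @derived Hg 1 x -> fst (fst x) = false /\ snd (fst x) = false).
  { intros x Hx. simpl in Hx. revert x Hx. apply gen_ind.
    - intros z [[[a b] c] [[[a' b'] c'] [_ [_ ->]]]]. destruct a, b, c, a', b', c'; simpl; auto.
    - simpl; auto.
    - intros [[a b] c] [[a' b'] c'] [? ?] [? ?]; simpl in *; subst; auto.
    - intros [[a b] c] [? ?]; simpl in *; subst; auto. }
  intros x Hx.
  change (gen (fun z => exists a b, @derived Hg 1 a /\ @derived Hg 1 b /\ z = comm a b) x) in Hx.
  revert x Hx. apply gen_ind.
  - intros z [p [q [Hp [Hq ->]]]]. apply (@comm_commute Hg).
    destruct (H1 p Hp), (H1 q Hq). destruct p as [[a b] c], q as [[a' b'] c']; simpl in *; subst.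
    destruct c, c'; reflexivity.
  - reflexivity.
  - intros x y -> ->. apply gmul1.
  - intros x ->. apply inv_one.
Qed.

Lemma ab_solv n (G : group) : (forall x y : G, gmul x y = gmul y x) -> 1 <= n -> n_solvable n G.
Proof. intros Hab Hn. apply (@derived_triv_le G 1 n); auto. apply ab_triv1; auto. Qed.

Lemma SD_conj {X B : group} (phi : Act X B) b x :
  gmul (SDb phi b) (SDk phi x) = gmul (SDk phi (phi b x)) (SDb phi b) :> SD phi.
Proof. simpl. rewrite !gmul1, act_gone, !mulr1. reflexivity. Qed.

Definition tr (i j : nat) (x : Vg) : Vg :=
  fun l => if Nat.eqb l i then (if Nat.eqb i j then x l else xorb (x i) (x j)) else x l.

Lemma tr_lin i j (x y : Vg) : tr i j (gmul x y) = gmul (tr i j x) (tr i j y).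
Proof.
  apply functional_extensionality; intro l. unfold tr; simpl.
  destruct (l =? i), (i =? j); try reflexivity.
  destruct (x i), (y i), (x j), (y j); reflexivity.
Qed.

Lemma tr_inv i j x : tr i j (tr i j x) = x.
Proof.
  apply functional_extensionality; intro l. unfold tr.
  destruct (Nat.eqb_spec l i); [|reflexivity]. subst l.
  rewrite Nat.eqb_refl. destruct (Nat.eqb_spec i j); [reflexivity|].
  rewrite (proj2 (Nat.eqb_neq j i)) by auto. destruct (x i), (x j); reflexivity.
Qed.

Definition actC2 (t : Vg -> Vg) (Hl : forall x y, t (gmul x y) = gmul (t x) (t y))
  (Hi : forall x, t (t x) = x) : Act Vg C2g.
Proof.
  refine (@MkAct Vg C2g (fun (b : bool) x => if b then t x else x) _ _ _).
  - intros b x y; destruct b; [apply Hl| reflexivity].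
  - intros b c x; destruct b, c; simpl; auto.
  - reflexivity.
Defined.

Definition actT (i j : nat) : Act Vg C2g := actC2 (tr i j) (tr_lin i j) (tr_inv i j).
Definition actId : Act Vg C2g := actC2 (fun x => x) (fun _ _ => eq_refl) (fun _ => eq_refl).

Definition phiHf (i j k : nat) (g : Hg) (x : Vg) : Vg :=
  match g with ((a, b), c) => fun l =>
    if Nat.eqb l i then xorb (x i) (xorb (a && x j) (c && x k))
    else if Nat.eqb l j then xorb (x j) (b && x k) else x l end.

Definition actH (i j k : nat) (Hij : i <> j) (Hjk : j <> k) (Hik : i <> k) : Act Vg Hg.
Proof.
  refine (@MkAct Vg Hg (phiHf i j k) _ _ _).
  - intros [[a b] c] x y. apply functional_extensionality; intro l. simpl.
    destruct (l =? i), (l =? j); try reflexivity;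
    destruct a, b, c, (x i), (y i), (x j), (y j), (x k), (y k); reflexivity.
  - intros [[a b] c] [[a' b'] c'] x. apply functional_extensionality; intro l. simpl.
    assert (E1 : Nat.eqb j i = false) by (apply Nat.eqb_neq; auto).
    assert (E2 : Nat.eqb k i = false) by (apply Nat.eqb_neq; auto).
    assert (E3 : Nat.eqb k j = false) by (apply Nat.eqb_neq; auto).
    rewrite !Nat.eqb_refl, E1, E2, E3.
    destruct (l =? i), (l =? j); try reflexivity;
    destruct a, b, c, a', b', c', (x i), (x j), (x k); reflexivity.
  - intros x. apply functional_extensionality; intro l. simpl.
    destruct (Nat.eqb_spec l i); [subst l; destruct (x i); reflexivity|].
    destruct (Nat.eqb_spec l j); [subst l; destruct (x j); reflexivity| reflexivity].
Defined.

Definition fah : hom C2g Hg.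
Proof. refine (@Hom C2g Hg (fun b : bool => ((b, false), false)) _). intros [] []; reflexivity. Defined.
Definition fbh : hom C2g Hg.
Proof. refine (@Hom C2g Hg (fun b : bool => ((false, b), false)) _). intros [] []; reflexivity. Defined.
Definition fch : hom C2g Hg.
Proof. refine (@Hom C2g Hg (fun b : bool => ((false, false), b)) _). intros [] []; reflexivity. Defined.


Lemma C2_triv1 : forall x, @derived C2g 1 x -> x = gone.
Proof. apply ab_triv1, C2_ab. Qed.

Lemma not_war n (Hn : 3 <= n) : ~ weakly_action_representable n.
Proof.
  intro W.
  assert (SV : n_solvable n Vg) by (apply ab_solv; [exact Vg_ab| lia]).
  assert (SC : n_solvable n C2g) by (apply ab_solv; [exact C2_ab| lia]).
  assert (SHg : n_solvable n Hg) by (apply (@derived_triv_le Hg 2 n Hg_triv2); lia).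
  set (Vo := @Obj n Vg SV).
  set (C2o := @Obj n C2g SC).
  set (Ho := @Obj n Hg SHg).
  assert (SC2 : forall phi : Act Vg C2g, n_solvable n (SD phi)).
  { intro phi. apply (SD_solv n phi 1 Vg_ab C2_triv1). lia. }
  assert (SH : forall phi : Act Vg Hg, n_solvable n (SD phi)).
  { intro phi. apply (SD_solv n phi 2 Vg_ab Hg_triv2). lia. }
  set (Et := fun i j => @SDext n Vo C2o (actT i j) (SC2 _)).
  set (Etriv := @SDext n Vo C2o actId (SC2 _)).
  destruct (W Vo) as [M [tau [_ [Hinj Hnat]]]].
  set (Vv := fun i j => tau C2o (Et i j) true).
  assert (Htri : forall i j k, i <> j -> j <> k -> i <> k -> Vv i k = comm (Vv i j) (Vv j k)).
  { intros i j k Hij Hjk Hik.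
    set (EH := @SDext n Vo Ho (actH i j k Hij Hjk Hik) (SH _)).
    assert (Pa : is_pullback_splext (fah : hom C2o Ho) EH (Et i j)).
    { apply SD_pullback. intros b x. apply functional_extensionality; intro l.
      destruct b; simpl; unfold tr.
      + rewrite (proj2 (Nat.eqb_neq i j)) by auto.
        destruct (Nat.eqb_spec l i); [subst l|].
        * destruct (x i), (x j); reflexivity.
        * destruct (Nat.eqb_spec l j); [subst l; destruct (x j); reflexivity| reflexivity].
      + destruct (Nat.eqb_spec l i); [subst l; destruct (x i); reflexivity|].
        destruct (Nat.eqb_spec l j); [subst l; destruct (x j); reflexivity| reflexivity]. }
    assert (Pb : is_pullback_splext (fbh : hom C2o Ho) EH (Et j k)).
    { apply SD_pullback. intros b x. apply functional_extensionality; intro l.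
      destruct b; simpl; unfold tr.
      + rewrite (proj2 (Nat.eqb_neq j k)) by auto.
        destruct (Nat.eqb_spec l i); [subst l|].
        * rewrite (proj2 (Nat.eqb_neq i j)) by auto. destruct (x i); reflexivity.
        * destruct (Nat.eqb_spec l j); [subst l; destruct (x j), (x k); reflexivity| reflexivity].
      + destruct (Nat.eqb_spec l i); [subst l; destruct (x i); reflexivity|].
        destruct (Nat.eqb_spec l j); [subst l; destruct (x j); reflexivity| reflexivity]. }
    assert (Pc : is_pullback_splext (fch : hom C2o Ho) EH (Et i k)).
    { apply SD_pullback. intros b x. apply functional_extensionality; intro l.
      destruct b; simpl; unfold tr.
      + rewrite (proj2 (Nat.eqb_neq i k)) by auto.
        destruct (Nat.eqb_spec l i); [subst l|].
        * destruct (x i), (x k); reflexivity.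
        * destruct (Nat.eqb_spec l j); [subst l; destruct (x j); reflexivity| reflexivity].
      + destruct (Nat.eqb_spec l i); [subst l; destruct (x i); reflexivity|].
        destruct (Nat.eqb_spec l j); [subst l; destruct (x j); reflexivity| reflexivity]. }
    assert (Ha := Hnat Ho C2o (fah : hom C2o Ho) EH (Et i j) Pa).
    assert (Hb := Hnat Ho C2o (fbh : hom C2o Ho) EH (Et j k) Pb).
    assert (Hc := Hnat Ho C2o (fch : hom C2o Ho) EH (Et i k) Pc).
    unfold Vv.
    rewrite (Ha true), (Hb true), (Hc true). simpl.
    change (((false, false), true) : Hg) with (comm (((true, false), false) : Hg) ((false, true), false)).
    apply (hom_comm (tau Ho EH)). }
  assert (Hd : forall k i, @derived M k (Vv i (i + 2 ^ k))).
  { induction k as [|k IH]; intro i; [exact I|].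
    assert (P := Nat.pow_nonzero 2 k ltac:(lia)).
    rewrite (Htri i (i + 2 ^ k) (i + 2 ^ S k)) by (simpl; lia).
    apply gen_in. exists (Vv i (i + 2 ^ k)), (Vv (i + 2 ^ k) (i + 2 ^ S k)).
    split; [apply IH| split; [|reflexivity]].
    replace (i + 2 ^ S k) with (i + 2 ^ k + 2 ^ k) by (simpl; lia). apply IH. }
  assert (H0 : Vv 0 (2 ^ n) = gone) by exact (@osolv n M _ (Hd n 0)).
  assert (Hpb : is_pullback_splext (hzero C2o C2o) (Et 0 (2 ^ n)) Etriv).
  { apply SD_pullback. intros b x. destruct b; reflexivity. }
  assert (Heq : heq (tau C2o (Et 0 (2 ^ n))) (tau C2o Etriv)).
  { intro b. rewrite (Hnat _ _ _ _ _ Hpb b). simpl.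
    assert (Z : tau C2o (Et 0 (2 ^ n)) false = gone) by exact (hom_one (tau C2o (Et 0 (2 ^ n)))).
    transitivity (@gone M). { destruct b; [exact H0| exact Z]. } symmetry; exact Z. }
  destruct (Hinj _ _ _ Heq) as [u [v [_ [_ [Hk [_ Hb]]]]]].
  set (x := fun l => Nat.eqb l (2 ^ n)).
  assert (E1 := SD_conj (actT 0 (2 ^ n)) true x).
  assert (E2 := SD_conj actId true x).
  apply (f_equal u) in E1.
  rewrite (hmulP u), (hmulP u) in E1.
  assert (Hb' : u (SDb (actT 0 (2 ^ n)) true) = SDb actId true) by exact (Hb true).
  assert (Hk1 : u (SDk (actT 0 (2 ^ n)) x) = SDk actId x) by exact (Hk x).
  assert (Hk2 : u (SDk (actT 0 (2 ^ n)) (actT 0 (2 ^ n) true x)) = SDk actId (actT 0 (2 ^ n) true x))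
    by exact (Hk _).
  rewrite Hb', Hk1, Hk2 in E1.
  assert (E3 := eq_trans (eq_sym E1) E2).
  apply (mul_cancel_r (G := SD actId)) in E3.
  apply (f_equal (fun p : (Vg * C2g)%type => fst p 0)) in E3. clear E1. rename E3 into E1.
  simpl in E1. unfold tr, x in E1. simpl in E1.
  assert (P := Nat.pow_nonzero 2 n ltac:(lia)).
  destruct (2 ^ n) as [|m]; [lia|]. simpl in E1. rewrite Nat.eqb_refl in E1. discriminate.
Qed.


Lemma s_kinj {n} {X B : obj n} (E : splext X B) : forall x y, sk E x = sk E y -> x = y.
Proof. apply (@kernel_inj n _ _ _ _ _ (sk_ker E)). Qed.
Lemma s_ksurj {n} {X B : obj n} (E : splext X B) : forall z, sa E z = gone -> exists y, sk E y = z.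
Proof. apply (@kernel_surj n _ _ _ _ _ (sk_ker E)). Qed.
Lemma s_ka {n} {X B : obj n} (E : splext X B) x : sa E (sk E x) = gone.
Proof. apply (proj1 (sk_ker E)). Qed.
Lemma s_ab {n} {X B : obj n} (E : splext X B) b : sa E (sb E b) = b.
Proof. apply (sab E). Qed.

Definition kinv {n} {X B : obj n} (E : splext X B) (z : sA E) : X :=
  epsilon (inhabits (@gone X)) (fun y => sk E y = z).

Lemma kinv_spec {n} {X B : obj n} (E : splext X B) z : sa E z = gone -> sk E (kinv E z) = z.
Proof. intro H. apply (epsilon_spec (inhabits (@gone X)) (fun y => sk E y = z)). apply s_ksurj, H. Qed.

Lemma kinv_k {n} {X B : obj n} (E : splext X B) x : kinv E (sk E x) = x.
Proof. apply (s_kinj E). apply kinv_spec, s_ka. Qed.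

Definition actf {n} {X B : obj n} (E : splext X B) (b : B) (x : X) : X :=
  kinv E (gconj (sb E b) (sk E x)).

Lemma actf_spec {n} {X B : obj n} (E : splext X B) b x : sk E (actf E b x) = gconj (sb E b) (sk E x).
Proof.
  apply kinv_spec. unfold gconj. rewrite !hmulP, hom_inv, s_ka, s_ab. gnorm. reflexivity.
Qed.

Definition ActE {n} {X B : obj n} (E : splext X B) : Act X B.
Proof.
  refine (@MkAct X B (actf E) _ _ _).
  - intros b x y. apply (s_kinj E). rewrite hmulP, !actf_spec, hmulP. apply gconj_mul.
  - intros b c x. apply (s_kinj E). rewrite !actf_spec, hmulP, gconj_comp. reflexivity.
  - intros x. apply (s_kinj E). rewrite actf_spec, hom_one. apply gconj_one.
Defined.

Definition binv {n} {X B : obj n} (E : splext X B) (f : X -> X) : B :=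
  epsilon (inhabits (@gone B)) (fun b => forall x, f x = actf E b x).

Lemma binv_spec {n} {X B : obj n} (E : splext X B) (f : X -> X) :
  (exists b, forall x, f x = actf E b x) -> forall x, f x = actf E (binv E f) x.
Proof. intro H. apply (epsilon_spec (inhabits (@gone B)) (fun b => forall x, f x = actf E b x) H). Qed.

Definition img_in {n} {X B : obj n} (E : splext X B) (b : B) :
  exists b', forall x, actf E b x = actf E b' x :=
  ex_intro (fun b' => forall x, actf E b x = actf E b' x) b (fun x => eq_refl).

Lemma img_mul {n} {X B : obj n} {E : splext X B} (f g : X -> X)
  (Hf : exists b, forall x, f x = actf E b x) (Hg : exists b, forall x, g x = actf E b x) :
  exists b, forall x, f (g x) = actf E b x.
Proof.
  destruct Hf as [b Hb], Hg as [c Hc]. exists (gmul b c). intro x.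
  rewrite Hc, Hb. symmetry. apply (@act_mul _ _ (ActE E)).
Qed.

Lemma img_one {n} {X B : obj n} (E : splext X B) : exists b, forall x : X, x = actf E b x.
Proof. exists gone. intro x. symmetry. apply (@act_one _ _ (ActE E)). Qed.

Definition Bimg {n} {X B : obj n} (E : splext X B) : group.
Proof.
  refine (@Group {f : X -> X | exists b, forall x, f x = actf E b x}
    (fun f g => exist _ (fun x => proj1_sig f (proj1_sig g x)) (img_mul _ _ (proj2_sig f) (proj2_sig g)))
    (exist _ (fun x => x) (img_one E))
    (fun f => exist _ (actf E (ginv (binv E (proj1_sig f)))) (img_in E (ginv (binv E (proj1_sig f))))) _ _ _).
  - intros. apply sig_eq. reflexivity.
  - intros. apply sig_eq. reflexivity.
  - intros f. apply sig_eq. simpl. apply functional_extensionality; intro x.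
    rewrite (binv_spec E _ (proj2_sig f) x).
    change (ActE E (ginv (binv E (proj1_sig f))) (ActE E (binv E (proj1_sig f)) x) = x).
    rewrite <- act_mul, gmulV. apply act_one.
Defined.

Definition rho {n} {X B : obj n} (E : splext X B) : hom B (Bimg E).
Proof.
  refine (@Hom B (Bimg E) (fun b => exist _ (actf E b) (img_in E b)) _).
  intros b c. apply sig_eq. simpl. apply functional_extensionality; intro x.
  apply (@act_mul _ _ (ActE E)).
Defined.

Lemma rho_surj {n} {X B : obj n} (E : splext X B) : forall f, exists b, rho E b = f.
Proof.
  intro f. exists (binv E (proj1_sig f)). apply sig_eq. simpl.
  apply functional_extensionality; intro x. symmetry. apply (binv_spec E _ (proj2_sig f)).
Qed.

Definition BimgO {n} {X B : obj n} (E : splext X B) : obj n :=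
  @Obj n (Bimg E) (@nsolv_surj n _ _ (rho E) (rho_surj E) (@osolv n B)).

Definition ActB {n} {X B : obj n} (E : splext X B) : Act X (Bimg E).
Proof.
  refine (@MkAct X (Bimg E) (fun f x => proj1_sig f x) _ _ _).
  - intros f x y. simpl. rewrite !(binv_spec E _ (proj2_sig f)). apply (@act_hom _ _ (ActE E)).
  - reflexivity.
  - reflexivity.
Defined.

Definition pif {n} {X B : obj n} (E : splext X B) (z : sA E) : SD (ActB E) :=
  (kinv E (gmul z (ginv (sb E (sa E z)))), rho E (sa E z)).

Lemma pif_ker {n} {X B : obj n} (E : splext X B) z : sa E (gmul z (ginv (sb E (sa E z)))) = gone.
Proof. rewrite hmulP, hom_inv, s_ab. apply mulVr. Qed.

Definition piE {n} {X B : obj n} (E : splext X B) : hom (sA E) (SD (ActB E)).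
Proof.
  refine (@Hom (sA E) (SD (ActB E)) (pif E) _).
  intros z z'. unfold pif. simpl. apply injective_projections; simpl.
  - apply (s_kinj E).
    rewrite (kinv_spec E (gmul (gmul z z') (ginv (sb E (sa E (gmul z z')))))) by apply pif_ker.
    rewrite (hmulP (sk E)).
    change (proj1_sig (rho E (sa E z)) ?y) with (actf E (sa E z) y).
    rewrite actf_spec.
    rewrite (kinv_spec E (gmul z' (ginv (sb E (sa E z'))))) by apply pif_ker.
    rewrite (kinv_spec E (gmul z (ginv (sb E (sa E z))))) by apply pif_ker.
    unfold gconj. rewrite !hmulP. gnorm. reflexivity.
  - rewrite (hmulP (sa E)). apply (hmulP (rho E)).
Defined.

Lemma piE_surj {n} {X B : obj n} (E : splext X B) : forall p, exists z, piE E z = p.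
Proof.
  intros [x f]. destruct (rho_surj E f) as [b <-].
  exists (gmul (sk E x) (sb E b)). simpl. unfold pif.
  assert (Ha : sa E (gmul (sk E x) (sb E b)) = b).
  { rewrite hmulP, s_ka, s_ab. apply gmul1. }
  rewrite Ha. f_equal. rewrite <- gassoc, mulVr, mulr1. apply kinv_k.
Qed.

Definition AimgO {n} {X B : obj n} (E : splext X B) : n_solvable n (SD (ActB E)) :=
  @nsolv_surj n _ _ (piE E) (piE_surj E) (@osolv n (sA E)).

Definition Eimg {n} {X B : obj n} (E : splext X B) : splext X (BimgO E) :=
  @SDext n X (BimgO E) (ActB E) (AimgO E).

Definition morE {n} {X B : obj n} (E : splext X B) : splmor E (Eimg E).
Proof.
  refine (@SplMor n X B (BimgO E) E (Eimg E) (piE E) (rho E) _ _ _).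
  - intro x. simpl. unfold pif. apply injective_projections; simpl.
    + rewrite s_ka, hom_one, inv_one, mulr1. apply kinv_k.
    + rewrite s_ka. apply (hom_one (rho E)).
  - intro z. reflexivity.
  - intro b. simpl. unfold pif. apply injective_projections; simpl.
    + rewrite s_ab, mulVr. rewrite <- (hom_one (sk E)). apply kinv_k.
    + rewrite s_ab. reflexivity.
Defined.

Lemma SD_gconj {X B : group} (phi : Act X B) b x :
  gconj (SDb phi b) (SDk phi x) = SDk phi (phi b x) :> SD phi.
Proof. unfold gconj. rewrite SD_conj. gnorm. reflexivity. Qed.

Lemma Eimg_faithful {n} {X B : obj n} (E : splext X B) : faithful_splext (Eimg E).
Proof.
  intros B0 E0 f g.
  assert (HB : heq (mB f) (mB g)).
  { intro b0. apply sig_eq. apply functional_extensionality; intro x.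
    set (c := gconj (sb E0 b0) (sk E0 x)).
    assert (Hc : sa E0 c = gone).
    { unfold c, gconj. rewrite !hmulP, hom_inv, s_ka, s_ab. gnorm. reflexivity. }
    destruct (s_ksurj E0 c Hc) as [y Hy].
    assert (Hf : forall h : splmor E0 (Eimg E), proj1_sig (mB h b0) x = y).
    { intro h.
      assert (H1 : mA h c = SDk (ActB E) y).
      { rewrite <- Hy. exact (mk h y). }
      unfold c in H1. rewrite hom_gconj in H1.
      assert (H2 : mA h (sb E0 b0) = SDb (ActB E) (mB h b0)) by exact (mb h b0).
      assert (H3 : mA h (sk E0 x) = SDk (ActB E) x) by exact (mk h x).
      rewrite H2, H3 in H1.
      pose proof (SD_gconj (ActB E) (mB h b0) x) as H4.
      pose proof (eq_trans (eq_sym H4) H1) as H5.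
      apply (f_equal fst) in H5. exact H5. }
    rewrite (Hf f), (Hf g). reflexivity. }
  split; [|exact HB].
  intro z.
  set (z1 := gmul z (ginv (sb E0 (sa E0 z)))).
  assert (Hz1 : sa E0 z1 = gone).
  { unfold z1. rewrite hmulP, hom_inv, s_ab. apply mulVr. }
  destruct (s_ksurj E0 z1 Hz1) as [y Hy].
  assert (Hz : z = gmul (sk E0 y) (sb E0 (sa E0 z))).
  { rewrite Hy. unfold z1. gnorm. reflexivity. }
  rewrite Hz, !hmulP.
  assert (Ek : forall h : splmor E0 (Eimg E), mA h (sk E0 y) = SDk (ActB E) y) by (intro h; exact (mk h y)).
  assert (Eb : forall h : splmor E0 (Eimg E), mA h (sb E0 (sa E0 z)) = SDb (ActB E) (mB h (sa E0 z)))
    by (intro h; exact (mb h _)).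
  rewrite (Ek f), (Ek g), (Eb f), (Eb g), (HB (sa E0 z)). reflexivity.
Qed.

Lemma act_acc n : action_accessible n.
Proof.
  intros X B E. exists (BimgO E), (Eimg E). split.
  - apply Eimg_faithful.
  - constructor. exact (morE E).
Qed.


Definition qrel {G : group} (R : G -> Prop) (x y : G) : Prop := R (gmul (ginv x) y).

Definition qrep {G : group} (R : G -> Prop) (x : G) : G :=
  epsilon (inhabits (@gone G)) (fun z => qrel R z x).

Record nsub (G : group) (R : G -> Prop) : Prop := {
  ns1 : R gone;
  nsm : forall x y, R x -> R y -> R (gmul x y);
  nsi : forall x, R x -> R (ginv x);
  nsc : forall g x, R x -> R (gconj g x) }.
Arguments ns1 {G R} _.
Arguments nsm {G R} _ _ _ _ _.
Arguments nsi {G R} _ _ _.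
Arguments nsc {G R} _ _ _ _.

Lemma qrel_refl {G : group} {R : G -> Prop} (HR : nsub G R) x : qrel R x x.
Proof. unfold qrel. rewrite gmulV. apply (ns1 HR). Qed.
Lemma qrel_sym {G : group} {R : G -> Prop} (HR : nsub G R) x y : qrel R x y -> qrel R y x.
Proof. unfold qrel. intro H. apply (nsi HR) in H. rewrite inv_mul, inv_inv in H. exact H. Qed.
Lemma qrel_trans {G : group} {R : G -> Prop} (HR : nsub G R) x y z :
  qrel R x y -> qrel R y z -> qrel R x z.
Proof.
  unfold qrel. intros H1 H2. pose proof (nsm HR _ _ H1 H2) as H. gnormH H. exact H.
Qed.

Lemma qrep_rel {G : group} {R : G -> Prop} (HR : nsub G R) x : qrel R (qrep R x) x.
Proof.
  apply (epsilon_spec (inhabits (@gone G)) (fun z => qrel R z x)). exists x. apply (qrel_refl HR).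
Qed.

Lemma qrep_eq {G : group} {R : G -> Prop} (HR : nsub G R) x y : qrel R x y -> qrep R x = qrep R y.
Proof.
  intro H. unfold qrep. f_equal. apply functional_extensionality; intro z.
  apply propositional_extensionality. split; intro H'.
  - apply (qrel_trans HR _ _ _ H' H).
  - apply (qrel_trans HR _ _ _ H' (qrel_sym HR _ _ H)).
Qed.

Lemma qrep_idem {G : group} {R : G -> Prop} (HR : nsub G R) x : qrep R (qrep R x) = qrep R x.
Proof. apply (qrep_eq HR), (qrep_rel HR). Qed.

Lemma qrel_mul_l {G : group} {R : G -> Prop} x y y' : qrel R y y' -> qrel R (gmul x y) (gmul x y').
Proof. unfold qrel. intro H. gnorm. exact H. Qed.

Lemma qrel_mul_r {G : group} {R : G -> Prop} (HR : nsub G R) x x' y :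
  qrel R x x' -> qrel R (gmul x y) (gmul x' y).
Proof.
  unfold qrel. intro H. apply (nsc HR (ginv y)) in H. unfold gconj in H. gnormH H. gnorm. exact H.
Qed.

Definition Quot {G : group} {R : G -> Prop} (HR : nsub G R) : group.
Proof.
  refine (@Group {x : G | qrep R x = x}
    (fun a b => exist _ (qrep R (gmul (proj1_sig a) (proj1_sig b))) (qrep_idem HR _))
    (exist _ (qrep R gone) (qrep_idem HR _))
    (fun a => exist _ (qrep R (ginv (proj1_sig a))) (qrep_idem HR _)) _ _ _).
  - intros [x Hx] [y Hy] [z Hz]. apply sig_eq; simpl.
    rewrite (qrep_eq HR _ _ (qrel_mul_l x _ _ (qrep_rel HR (gmul y z)))).
    rewrite (qrep_eq HR _ _ (qrel_mul_r HR _ _ z (qrep_rel HR (gmul x y)))).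
    rewrite gassoc. reflexivity.
  - intros [x Hx]. apply sig_eq; simpl.
    rewrite (qrep_eq HR _ _ (qrel_mul_r HR _ _ x (qrep_rel HR gone))), gmul1. exact Hx.
  - intros [x Hx]. apply sig_eq; simpl.
    rewrite (qrep_eq HR _ _ (qrel_mul_r HR _ _ x (qrep_rel HR (ginv x)))), gmulV. reflexivity.
Defined.

Definition qproj {G : group} {R : G -> Prop} (HR : nsub G R) : hom G (Quot HR).
Proof.
  refine (@Hom G (Quot HR) (fun x => exist _ (qrep R x) (qrep_idem HR x)) _).
  intros x y. apply sig_eq; simpl.
  rewrite (qrep_eq HR _ _ (qrel_mul_r HR _ _ _ (qrep_rel HR x))).
  rewrite (qrep_eq HR _ _ (qrel_mul_l x _ _ (qrep_rel HR y))). reflexivity.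
Defined.

Lemma qproj_surj {G : group} {R : G -> Prop} (HR : nsub G R) : forall q, exists x, qproj HR x = q.
Proof. intros [x Hx]. exists x. apply sig_eq. exact Hx. Qed.

Lemma qproj_one {G : group} {R : G -> Prop} (HR : nsub G R) x : qproj HR x = gone <-> R x.
Proof.
  split.
  - intro H. apply (f_equal (@proj1_sig _ _)) in H. simpl in H.
    assert (H1 : qrel R x gone).
    { apply (qrel_trans HR _ (qrep R x)); [apply (qrel_sym HR), (qrep_rel HR)|].
      rewrite H. apply (qrep_rel HR). }
    unfold qrel in H1. rewrite mulr1 in H1. apply (nsi HR) in H1. rewrite inv_inv in H1. exact H1.
  - intro H. apply sig_eq; simpl. apply (qrep_eq HR). unfold qrel. rewrite mulr1. apply (nsi HR), H.
Qed.

Definition Nz {W Y : group} (f : hom W Y) (y : Y) : Prop :=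
  forall w, (exists w', gconj y (f w) = f w') /\ (exists w', gconj (ginv y) (f w) = f w').

Lemma Nz_one {W Y : group} (f : hom W Y) : Nz f gone.
Proof. intro w. rewrite inv_one, gconj_one. split; exists w; reflexivity. Qed.

Lemma Nz_mul {W Y : group} (f : hom W Y) x y : Nz f x -> Nz f y -> Nz f (gmul x y).
Proof.
  intros Hx Hy w. split.
  - rewrite gconj_comp. destruct (proj1 (Hy w)) as [w1 ->]. apply (proj1 (Hx w1)).
  - rewrite inv_mul, gconj_comp. destruct (proj2 (Hx w)) as [w1 ->]. apply (proj2 (Hy w1)).
Qed.

Lemma Nz_inv {W Y : group} (f : hom W Y) x : Nz f x -> Nz f (ginv x).
Proof. intros Hx w. rewrite inv_inv. split; [apply (proj2 (Hx w))| apply (proj1 (Hx w))]. Qed.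

Definition Ngrp {W Y : group} (f : hom W Y) : group :=
  @subgroup Y (Nz f) (Nz_one f) (Nz_mul f) (Nz_inv f).

Lemma Nz_img {W Y : group} (f : hom W Y) w : Nz f (f w).
Proof.
  intro v. split.
  - exists (gconj w v). rewrite hom_gconj. reflexivity.
  - exists (gconj (ginv w) v). rewrite hom_gconj, hom_inv. reflexivity.
Qed.

Definition nnh {W Y : group} (f : hom W Y) : hom W (Ngrp f).
Proof.
  refine (@Hom W (Ngrp f) (fun w => exist _ (f w) (Nz_img f w)) _).
  intros x y. apply sig_eq. simpl. apply hmulP.
Defined.

Definition Rn {W Y : group} (f : hom W Y) (z : Ngrp f) : Prop := exists w, proj1_sig z = f w.

Lemma Rn_nsub {W Y : group} (f : hom W Y) : nsub (Ngrp f) (Rn f).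
Proof.
  constructor.
  - exists gone. symmetry. apply hom_one.
  - intros a b [w1 E1] [w2 E2]. exists (gmul w1 w2). simpl. rewrite hmulP, <- E1, <- E2. reflexivity.
  - intros a [w1 E1]. exists (ginv w1). simpl. rewrite hom_inv, <- E1. reflexivity.
  - intros g a [w1 E1]. unfold Rn. simpl. rewrite E1. apply (proj1 (proj2_sig g w1)).
Qed.

Lemma normalizers n : admits_normalizers n.
Proof.
  intros W Y f Hm.
  pose proof (@mono_inj n _ _ _ Hm) as finj.
  set (NO := @Obj n (Ngrp f) (@sub_solv n Y (Nz f) _ _ _ (@osolv n Y))).
  set (ZO := @Obj n (Quot (Rn_nsub f)) (@nsolv_surj n _ _ (qproj (Rn_nsub f)) (qproj_surj _) (@osolv n NO))).
  exists NO, (nnh f), (incl : hom NO Y). split; [|split; [|split]].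
  - exists ZO, (qproj (Rn_nsub f)). split.
    + intro w. apply (qproj_one (Rn_nsub f)). exists w. reflexivity.
    + intros T g Hg.
      assert (HR : forall t, exists w, f w = proj1_sig (g t)).
      { intro t. destruct (proj1 (qproj_one (Rn_nsub f) (g t)) (Hg t)) as [w Hw]. exists w. auto. }
      set (wf := fun t => epsilon (inhabits (@gone W)) (fun w => f w = proj1_sig (g t))).
      assert (Hwf : forall t, f (wf t) = proj1_sig (g t)).
      { intro t. apply (epsilon_spec (inhabits (@gone W)) (fun w => f w = proj1_sig (g t))), HR. }
      assert (Hwm : forall x y, wf (gmul x y) = gmul (wf x) (wf y)).
      { intros x y. apply finj. rewrite hmulP, !Hwf, (hmulP g). reflexivity. }
      exists (@Hom T W wf Hwm). split.
      * intro t. apply sig_eq. simpl. apply Hwf.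
      * intros w' Hw' t. apply finj. simpl. rewrite Hwf, <- (Hw' t). reflexivity.
  - apply inj_mono. intros x y H. apply sig_eq. exact H.
  - intro w. reflexivity.
  - intros N' nn' m' Hnn' Hm' Hc.
    pose proof (@mono_inj n _ _ _ Hm') as minj.
    destruct Hnn' as [Z' [p' Hk]].
    assert (Hin : forall y', Nz f (m' y')).
    { assert (Hgen : forall y' w, exists w', gconj (m' y') (f w) = f w').
      { intros y' w. rewrite <- (Hc w). simpl.
        assert (Hp : p' (gconj y' (nn' w)) = gone).
        { assert (E : p' (nn' w) = gone) by exact (proj1 Hk w).
          rewrite hom_gconj, E. unfold gconj. gnorm. reflexivity. }
        destruct (@kernel_surj n _ _ _ _ _ Hk _ Hp) as [w'' Hw''].
        exists w''. rewrite <- (Hc w''). simpl. rewrite Hw'', hom_gconj. reflexivity. }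
      intros y' w. split; [apply Hgen|]. rewrite <- hom_inv. apply Hgen. }
    assert (Hum : forall x y, (exist _ (m' (gmul x y)) (Hin (gmul x y)) : Ngrp f) =
        gmul (exist _ (m' x) (Hin x) : Ngrp f) (exist _ (m' y) (Hin y))).
    { intros x y. apply sig_eq. simpl. apply hmulP. }
    exists (@Hom N' (Ngrp f) (fun y' => exist _ (m' y') (Hin y')) Hum). split; [|split].
    + intro w. apply sig_eq. simpl. apply (Hc w).
    + intro y'. reflexivity.
    + intros u' _ H2 y'. apply sig_eq. simpl. apply (H2 y').
Qed.


Theorem mainTheorem3 (n : nat) (Hn : 3 <= n) :
  action_accessible n /\ admits_normalizers n /\ ~ weakly_action_representable n.
Proof.
  split; [apply act_acc| split; [apply normalizers| apply not_war; exact Hn]].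
Qed.
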